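(* Under the standing assumptions below, one of the following holds: either there exist a fixed $a'_1\in M'$ and a map $v_1:N\to N'$ such that $\phi\left(\left[\begin{smallmatrix} 1 & 0\\ n & 0\end{smallmatrix}\right]\right)=\left[\begin{smallmatrix} 1 & a'_1\\ v_1(n) & 0\end{smallmatrix}\right]$ for all $n\in N$; or there exist a fixed $b'_2\in N'$ and a map $u_2:N\to M'$ such that $\phi\left(\left[\begin{smallmatrix} 1 & 0\\ n & 0\end{smallmatrix}\right]\right)=\left[\begin{smallmatrix} 0 & u_2(n)\\ b'_2 & 1\end{smallmatrix}\right]$ for all $n\in N$.
   Context: All rings have an identity $1\neq 0$. Standing assumptions: $R,S,R',S'$ are rings whose only idempotents are $0$ and $1$; $M$ is an $R$-$S$-bimodule, $N$ an $S$-$R$-bimodule, $M'$ an $R'$-$S'$-bimodule, $N'$ an $S'$-$R'$-bimodule; $T=\left[\begin{smallmatrix} R & M\\ N & S\end{smallmatrix}\right]$ and $T'=\left[\begin{smallmatrix} R' & M'\\ N' & S'\end{smallmatrix}\right]$ are the Morita context rings with both Morita maps zero, i.e. the sets of formal matrices with entrywise addition and product $\left[\begin{smallmatrix} r & m\\ n & s\end{smallmatrix}\right]\left[\begin{smallmatrix} r' & m'\\ n' & s'\end{smallmatrix}\right]=\left[\begin{smallmatrix} rr' & rm'+ms'\\ nr'+sn' & ss'\end{smallmatrix}\right]$; and $\phi:T\to T'$ is a ring isomorphism. *)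

(* Defs.v *)
From HB Require Import structures.
From mathcomp Require Import all_boot all_order all_algebra.
Set Implicit Arguments. Unset Strict Implicit. Unset Printing Implicit Defensive.
Import GRing.Theory.
Local Open Scope ring_scope.

Record bimod (R S : nzRingType) := Bimod {
  bcar :> zmodType;
  lact : R -> bcar -> bcar;
  ract : bcar -> S -> bcar;
  lactDl : forall (r r' : R) (m : bcar), lact (r + r') m = lact r m + lact r' m;
  lactDr : forall (r : R) (m m' : bcar), lact r (m + m') = lact r m + lact r m';
  lactA  : forall (r r' : R) (m : bcar), lact (r * r') m = lact r (lact r' m);
  lact1  : forall m : bcar, lact 1 m = m;
  ractDl : forall (m m' : bcar) (s : S), ract (m + m') s = ract m s + ract m' s;
  ractDr : forall (m : bcar) (s s' : S), ract m (s + s') = ract m s + ract m s';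
  ractA  : forall (m : bcar) (s s' : S), ract m (s * s') = ract (ract m s) s';
  ract1  : forall m : bcar, ract m 1 = m;
  lractA : forall (r : R) (m : bcar) (s : S), ract (lact r m) s = lact r (ract m s)
}.

(* The Morita context ring [[R, M], [N, S]] with both Morita maps zero. *)
Record mctx (R S : nzRingType) (M : bimod R S) (N : bimod S R) := MC {
  e11 : R; e12 : M; e21 : N; e22 : S }.

Section MCtx.
Variables (R S : nzRingType) (M : bimod R S) (N : bimod S R).
Definition mc_add (x y : mctx M N) : mctx M N :=
  MC (e11 x + e11 y) (e12 x + e12 y) (e21 x + e21 y) (e22 x + e22 y).
Definition mc_mul (x y : mctx M N) : mctx M N :=
  MC (e11 x * e11 y)
     (lact (e11 x) (e12 y) + ract (e12 x) (e22 y))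
     (ract (e21 x) (e11 y) + lact (e22 x) (e21 y))
     (e22 x * e22 y).
Definition mc_one : mctx M N := MC 1 0 0 1.
End MCtx.

Definition mc_ring_iso (R S R' S' : nzRingType) (M : bimod R S) (N : bimod S R)
  (M' : bimod R' S') (N' : bimod S' R') (phi : mctx M N -> mctx M' N') : Prop :=
  [/\ bijective phi,
      forall x y, phi (mc_add x y) = mc_add (phi x) (phi y),
      forall x y, phi (mc_mul x y) = mc_mul (phi x) (phi y)
    & phi (mc_one M N) = mc_one M' N'].

Definition only_trivial_idempotents (R : nzRingType) : Prop :=
  forall e : R, e * e = e -> e = 0 \/ e = 1.

(* Main.v *)
Require Import Defs.
From HB Require Import structures.
From mathcomp Require Import all_boot all_order all_algebra.
Import GRing.Theory.
Local Open Scope ring_scope.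

Lemma idem_xx (z : zmodType) (a : z) : a = a + a -> a = 0.
Proof. by move=> /eqP; rewrite -subr_eq subrr eq_sym => /eqP. Qed.

Section Aux.
Variables (R S : nzRingType) (M : bimod R S).
Lemma lact0r (m : M) : lact (0 : R) m = 0.
Proof. by apply: idem_xx; rewrite -lactDl addr0. Qed.
Lemma lactr0 (r : R) : lact r (0 : M) = 0.
Proof. by apply: idem_xx; rewrite -lactDr addr0. Qed.
Lemma ract0r (s : S) : ract (0 : M) s = 0.
Proof. by apply: idem_xx; rewrite -ractDl addr0. Qed.
Lemma ractr0 (m : M) : ract m (0 : S) = 0.
Proof. by apply: idem_xx; rewrite -ractDr addr0. Qed.
End Aux.

Theorem proposition4p4 (R S R' S' : nzRingType)
  (M : bimod R S) (N : bimod S R) (M' : bimod R' S') (N' : bimod S' R')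
  (hR : only_trivial_idempotents R) (hS : only_trivial_idempotents S)
  (hR' : only_trivial_idempotents R') (hS' : only_trivial_idempotents S')
  (phi : mctx M N -> mctx M' N') (hphi : mc_ring_iso phi) :
  (exists (a1 : M') (v1 : N -> N'),
      forall n : N, phi (MC (1 : R) (0 : M) n (0 : S)) = MC (1 : R') a1 (v1 n) (0 : S'))
  \/
  (exists (b2 : N') (u2 : N -> M'),
      forall n : N, phi (MC (1 : R) (0 : M) n (0 : S)) = MC (0 : R') (u2 n) b2 (1 : S')).
Proof.
case: hphi => [[psi phiK _] hadd hmul hone].
have inj : injective phi := can_inj phiK.
pose x (n : N) : mctx M N := MC 1 0 n 0.
have xx : forall n k, mc_mul (x n) (x k) = x n.
  move=> n k; rewrite /mc_mul /x /=.
  by rewrite mulr1 mulr0 lactr0 ract0r addr0 ract1 lact0r addr0.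
have y0 : phi (MC 0 0 0 0) = MC 0 0 0 0.
  have := hadd (MC 0 0 0 0) (MC 0 0 0 0).
  rewrite /mc_add /= !addr0; case: (phi _) => a b c d [] /idem_xx -> /idem_xx ->
    /idem_xx -> /idem_xx ->; done.
have cases : forall n, (e11 (phi (x n)) = 1 /\ e22 (phi (x n)) = 0) \/
                       (e11 (phi (x n)) = 0 /\ e22 (phi (x n)) = 1).
  move=> n; have := hmul (x n) (x n); rewrite xx.
  case E: (phi (x n)) => [a b c d]; rewrite /mc_mul /= => -[ea eb ec ed].
  have [a0|a1] := hR' a (esym ea); have [d0|d1] := hS' d (esym ed); subst a d.
  - exfalso; move: eb ec; rewrite !lact0r !ractr0 !addr0 => b0 c0.
    subst b c; have := inj _ _ (etrans E (esym y0)); rewrite /x => -[] /eqP.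
    by rewrite oner_eq0.
  - by right.
  - by left.
  - exfalso; move: eb ec; rewrite lact1 ract1 lact1 ract1 => /idem_xx b0 /idem_xx c0.
    subst b c; have := inj _ _ (etrans E (esym hone)); rewrite /x /mc_one => -[] _ /eqP.
    by rewrite eq_sym oner_eq0.
have key : forall n, phi (x n) = mc_mul (phi (x n)) (phi (x 0)) by move=> n; rewrite -hmul xx.
case: (cases 0) => [[h1 h2]|[h1 h2]]; [left|right].
- exists (e12 (phi (x 0))), (fun n => e21 (phi (x n))) => n.
  have -> : MC (1:R) (0:M) n (0:S) = x n by [].
  have := key n; case: (cases n) => [[k1 k2]|[k1 k2]].
  + case E: (phi (x n)) => [a b c d] /=; rewrite E /= in k1 k2; subst a d.
    move=> /(congr1 (@e12 _ _ _ _)) /=; rewrite h2 ractr0 addr0 lact1 => ->; done.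
  + case E: (phi (x n)) => [a b c d] /=; rewrite E /= in k1 k2; subst a d.
    move=> /(congr1 (@e22 _ _ _ _)) /=; rewrite h2 mulr0 => /eqP; by rewrite oner_eq0.
- exists (e21 (phi (x 0))), (fun n => e12 (phi (x n))) => n.
  have -> : MC (1:R) (0:M) n (0:S) = x n by [].
  have := key n; case: (cases n) => [[k1 k2]|[k1 k2]].
  + case E: (phi (x n)) => [a b c d] /=; rewrite E /= in k1 k2; subst a d.
    move=> /(congr1 (@e11 _ _ _ _)) /=; rewrite h1 mulr0 => /eqP; by rewrite oner_eq0.
  + case E: (phi (x n)) => [a b c d] /=; rewrite E /= in k1 k2; subst a d.
    move=> /(congr1 (@e21 _ _ _ _)) /=; rewrite h1 ractr0 add0r lact1 => ->; done.
Qed.
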